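(* Let $\alpha\neq\beta$ be complex numbers and let $(g_n)_{n\ge0}$ be the polynomials defined in the context. Then $$g_n(\alpha)=\frac{1}{n}\sum_{k=0}^{n-1}\binom{n}{k}\binom{n}{k+1}\beta^{n-k}\alpha^{k}\qquad (n\ge1),\qquad g_0(\alpha)=1 .$$
   Context: Fix complex numbers $\alpha\neq\beta$. Define polynomials $g_n(x)\in\mathbb{C}[x]$ recursively by $g_0(x)=1$ and, for $n\ge1$, $$(x-\alpha)(\alpha-\beta)^{n-1}g_n(x)=\alpha(x-\beta)^n g_{n-1}(\alpha)-x(\alpha-\beta)^n g_{n-1}(x).$$ (The right-hand side vanishes at $x=\alpha$, so it is divisible by $x-\alpha$ and $g_n$ is a uniquely determined polynomial.) Here $g_n(\alpha)$ denotes the value of the polynomial $g_n$ at $x=\alpha$. *)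

(* Defs.v *)
From HB Require Import structures.
From mathcomp Require Import all_boot all_order all_algebra.
From mathcomp Require Import complex.
From mathcomp Require Import Rstruct.
From Stdlib Require Rdefinitions.
Set Implicit Arguments. Unset Strict Implicit. Unset Printing Implicit Defensive.
Import Order.TTheory GRing.Theory Num.Theory.

Definition Cplx : Type := complex Rdefinitions.R.

(* Main.v *)
Require Import Defs.
From HB Require Import structures.
From mathcomp Require Import all_boot all_order all_algebra.
From mathcomp Require Import complex.
From mathcomp Require Import Rstruct.
From mathcomp Require Import ring zify.
Import Order.TTheory GRing.Theory Num.Theory.
Local Open Scope ring_scope.
Definition D (j k : nat) : nat :=
  match k with 0 => (j == 0)%N | k'.+1 => match j with 0 => 0 | j'.+1 => 'C(j', k') end end.

Lemma D_S j k : D j.+1 k.+1 = (D j k.+1 + D j k)%N.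
Proof.
case: j => [|j]; first by case: k => [|k]; rewrite /= ?bin0n.
case: k => [|k] /=; first by rewrite !bin0.
by rewrite binS.
Qed.

Lemma sumD n k : (\sum_(j < n.+1) D j k)%N = D n.+1 k.+1.
Proof.
elim: n => [|n IH]; first by rewrite big_ord1; case: k.
by rewrite big_ord_recr /= IH -D_S.
Qed.

Lemma ring_aux (R : comRingType) (n:nat) (X T G0 G1 d a b c : R) :
  X = d*T + b -> a = d + b -> (T - 1)*G1 = c*T^+(n.+1) - (b*G0 + d*(T*G0)) ->
  (X - a)*d^+n*G1 = c*(X-b)^+(n.+1) - X*(d^+(n.+1))*G0.
Proof.
move=> -> -> h.
have -> : d * T + b - b = d * T by ring.
rewrite exprMn.
have -> : (d * T + b - (d + b)) * d ^+ n * G1 = d^+n.+1 * ((T-1)*G1) by rewrite exprS; ring.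
rewrite h !exprS; ring.
Qed.

Definition Af (F : fieldType) (n j k : nat) : F :=
  (D j k)%:R * (D n k.+1)%:R - (D j k.+1)%:R * (D n k)%:R.

Definition bb (F : fieldType) (a b : F) (n j : nat) : F :=
  \sum_(k < n.+1) Af F n j k * (a ^+ k * b ^+ (n - k)).

Lemma AfZ (F : fieldType) n j k :
  Af F n.+1 j k.+1 - Af F n.+1 j.+1 k.+1 + Af F n j.+1 k.+1 - Af F n j k.+1 + Af F n j k = 0.
Proof.
rewrite /Af (D_S n k.+1) (D_S n k) (D_S j k) (D_S j k.+1) !natrD; ring.
Qed.

Lemma AfZ0 (F : fieldType) n j : (0 < n)%N ->
  Af F n.+1 j 0 - Af F n.+1 j.+1 0 + Af F n j.+1 0 - Af F n j 0 = 0.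
Proof.
case: n => // n _; rewrite /Af /= !bin0; ring.
Qed.

Lemma Af_big (F : fieldType) n j : (0 < n)%N -> Af F n j n.+1 = 0.
Proof.
case: n => // n _; rewrite /Af /= !bin_small ?mul0n //; ring.
Qed.

Lemma sum_shift_b (F : fieldType) (a b : F) n (f : nat -> F) :
  b * (\sum_(k < n.+1) f k * (a ^+ k * b ^+ (n - k)))
  = \sum_(k < n.+1) f k * (a ^+ k * b ^+ (n.+1 - k)).
Proof.
rewrite mulr_sumr; apply: eq_bigr => k _.
rewrite subSn; last by rewrite -ltnS.
rewrite exprS; ring.
Qed.

Lemma sum_shift_a (F : fieldType) (a b : F) n (f : nat -> F) :
  a * (\sum_(k < n.+1) f k * (a ^+ k * b ^+ (n - k)))
  = \sum_(k < n.+1) f k * (a ^+ k.+1 * b ^+ (n.+1 - k.+1)).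
Proof.
rewrite mulr_sumr; apply: eq_bigr => k _.
rewrite subSS exprS; ring.
Qed.
Arguments bb {F}.
Lemma key (F : fieldType) (a b : F) n j : (0 < n)%N ->
  bb a b n.+1 j - bb a b n.+1 j.+1 + b * bb a b n j.+1 + (a - b) * bb a b n j = 0.
Proof.
move=> n0; rewrite /bb.
set m := fun k => a ^+ k * b ^+ (n.+1 - k).
have -> : forall X : F, (a - b) * X = a * X - b * X by move=> X; ring.
rewrite !sum_shift_b sum_shift_a.
have ext : forall f : nat -> F, f n.+1 = 0 ->
   \sum_(k < n.+1) f k * (a ^+ k * b ^+ (n.+1 - k)) = \sum_(k < n.+2) f k * m k.
  by move=> f hf; rewrite [RHS]big_ord_recr /= hf mul0r addr0.
rewrite (ext (Af F n j.+1)) ?Af_big // (ext (Af F n j)) ?Af_big //.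
rewrite -!sumrB.
have -> : forall x y z w : F, x + y + (z - w) = (x + y - w) + z by move=> *; ring.
rewrite /m -big_split -sumrB /= big_ord_recl /= -addrA -big_split /=.
rewrite big1 ?addr0.
  rewrite -!mulrBl -mulrDl -mulrBl.
  by rewrite AfZ0 // mul0r.
move=> k _.
rewrite -!mulrBl -!mulrDl -!mulrBl /bump /= add1n.
by rewrite -mulrDl AfZ mul0r.
Qed.

Definition H (F : fieldType) (a b : F) (n : nat) : {poly F} :=
  if n is 0 then 1 else \poly_(j < n.+1) bb a b n j.
Arguments H {F}.

Lemma coefH (F : fieldType) (a b : F) n i : (0 < n)%N ->
  (H a b n)`_i = if (i < n.+1)%N then bb a b n i else 0.
Proof. by case: n => // n _; rewrite /H coef_poly. Qed.

Lemma bb0 (F : fieldType) (a b : F) m : (0 < m)%N -> bb a b m 0 = b ^+ m.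
Proof.
case: m => // m _; rewrite /bb big_ord_recl big1 ?addr0.
  by rewrite /Af /= subn0 expr0 bin0; ring.
by move=> k _; rewrite lift0 /Af /=; ring.
Qed.

Lemma bbnn (F : fieldType) (a b : F) m : bb a b m m = 0.
Proof. by rewrite /bb big1 // => k _; rewrite /Af; ring. Qed.

Lemma step (F : fieldType) (a b : F) n :
  ('X - 1) * H a b n.+1 = (a * (H a b n).[1]) *: 'X^(n.+1) - (b *: H a b n + (a - b) *: ('X * H a b n)).
Proof.
case: n => [|n].
  have -> : H a b 1 = b%:P.
    apply/polyP => i; rewrite coefH // coefC.
    case: i => [|[|i]] //=; first by rewrite bb0 // expr1.
    by rewrite bbnn.
  rewrite /= hornerC -!mul_polyC polyCB; ring.
apply/eqP; rewrite -subr_eq0; apply/eqP.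
set R := (('X - 1) * H a b n.+2 - _).
have hc : forall i, i != n.+2 -> R`_i = 0.
  move=> i hi.
  rewrite /R mulrBl mul1r !coefB coefXM !coefD !coefZ coefXn coefXM (negbTE hi) mulr0 sub0r.
  rewrite !coefH //.
  case: i hi => [|i] hi /=.
    rewrite !bb0 // exprS; ring.
  case: (ltngtP i n.+1) => hin.
  - have e1 : (i < n.+3)%N = true by lia.
    have e2 : (i.+1 < n.+3)%N = true by lia.
    have e3 : (i.+1 < n.+2)%N = true by lia.
    have e4 : (i < n.+2)%N = true by lia.
    rewrite e1 e2 e3 e4.
    apply: (etrans _ (key _ a b n.+1 i _)) => //; ring.
  - have e2 : (i.+1 < n.+3)%N = false by lia.
    have e3 : (i.+1 < n.+2)%N = false by lia.
    have e4 : (i < n.+2)%N = false by lia.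
    rewrite e2 e3 e4; case: ltnP => h5; last by ring.
    have -> : i = n.+2 by lia.
    rewrite bbnn; ring.
  - by subst i; rewrite eqxx in hi.
have hR : R = R`_n.+2 *: 'X^(n.+2).
  apply/polyP => i; rewrite coefZ coefXn.
  case: (eqVneq i n.+2) => [->|hi]; first by rewrite mulr1.
  by rewrite hc // mulr0.
have h1 : R.[1] = 0.
  rewrite /R !(hornerXn, hornerD, hornerN, hornerZ, hornerX, hornerC, hornerXn, hornerM) expr1n; ring.
move: h1; rewrite hR hornerZ hornerXn expr1n mulr1 => ->.
by rewrite scale0r.
Qed.

Lemma Gk (F : numFieldType) N k :
  (N.+1%:R : F) * ((D N.+2 k.+1)%:R * (D N.+1 k.+1)%:R - (D N.+2 k.+2)%:R * (D N.+1 k)%:R)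
  = 'C(N.+1, k)%:R * 'C(N.+1, k.+1)%:R.
Proof.
rewrite /=.
case: k => [|k].
  by rewrite /= !bin0 bin1; ring.
rewrite /=.
have h1 := congr1 (fun m => m%:R : F) (mul_bin_down N.+1 k.+1).
have h2 := congr1 (fun m => m%:R : F) (mul_bin_diag N.+1 k).
have h3 := congr1 (fun m => m%:R : F) (mul_bin_left N.+1 k.+1).
rewrite /= !natrM in h1 h2 h3.
have -> : forall N x c y d : F, N * (x * c - y * d) = x * (N * c) - y * (N * d)
  by move=> *; ring.
rewrite h1 h2 -h3.
rewrite -[k.+2]addn1 -[k.+1]addn1 !natrD; ring.
Qed.

Lemma Hval (F : numFieldType) (a b : F) n : (0 < n)%N ->
  (H a b n).[1] = (n%:R)^-1 * \sum_(k < n) ('C(n, k)%:R * 'C(n, k.+1)%:R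
                                 * b ^+ (n - k) * a ^+ k).
Proof.
case: n => // N _.
rewrite /H horner_poly.
under eq_bigr do rewrite expr1n mulr1.
rewrite /bb exchange_big /=.
under eq_bigr do rewrite -mulr_suml.
have hs : forall k : nat, \sum_(j < N.+2) Af F N.+1 j k
   = (D N.+2 k.+1)%:R * (D N.+1 k.+1)%:R - (D N.+2 k.+2)%:R * (D N.+1 k)%:R.
  move=> k; rewrite /Af sumrB -!mulr_suml -!natr_sum !sumD //.
under eq_bigr do rewrite hs.
have hz : forall x : F, ((D N.+2 N.+2)%:R * (D N.+1 N.+2)%:R - (D N.+2 N.+3)%:R * (D N.+1 N.+1)%:R) * x = 0.
  by move=> x; rewrite /= (bin_small (ltnSn N)) (bin_small (ltnSn N.+1)); ring.
rewrite big_ord_recr hz [X in X = _]/= addr0.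
rewrite mulr_sumr; apply: eq_bigr => k _.
apply: (mulfI (x:= N.+1%:R)); first by rewrite pnatr_eq0.
rewrite mulrA Gk [RHS]mulrA mulfV ?pnatr_eq0 // mul1r; ring.
Qed.

Lemma compXn (F : fieldType) (T : {poly F}) n : 'X^n \Po T = T ^+ n.
Proof.
elim: n => [|n IH]; first by rewrite expr0 -polyC1 comp_polyC.
by rewrite !exprS comp_polyM comp_polyX IH.
Qed.

Theorem mainTheorem1 (alpha beta : Cplx) (g : nat -> {poly Cplx}) :
  alpha != beta ->
  g 0%N = 1 ->
  (forall n : nat,
      ('X - alpha%:P) * ((alpha - beta) ^+ n)%:P * g n.+1
      = (alpha * (g n).[alpha])%:P * ('X - beta%:P) ^+ n.+1
        - 'X * ((alpha - beta) ^+ n.+1)%:P * g n) ->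
  (g 0%N).[alpha] = 1 /\
  (forall n : nat, (0 < n)%N ->
     (g n).[alpha]
     = (n%:R)^-1 * \sum_(k < n) ('C(n, k)%:R * 'C(n, k.+1)%:R
                                 * beta ^+ (n - k) * alpha ^+ k)).
Proof.
move=> hab g0 hrec.
set d := alpha - beta.
have d0 : d != 0 by rewrite subr_eq0.
set T := d^-1 *: ('X - beta%:P).
have hT1 : T.[alpha] = 1.
  by rewrite /T hornerZ hornerD hornerN hornerX hornerC mulVf.
have hX : 'X = d%:P * T + beta%:P.
  by rewrite /T mul_polyC scalerA mulfV // scale1r subrK.
have hg : forall n, g n = H alpha beta n \Po T.
  elim => [|n IH]; first by rewrite g0 /H -polyC1 comp_polyC.
  have hr := hrec n.
  rewrite IH horner_comp hT1 in hr.
  have hs := congr1 (comp_poly T) (step _ alpha beta n).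
  rewrite !(comp_polyM, comp_polyB, comp_polyD, comp_polyZ, compXn, comp_polyX) -polyC1 comp_polyC polyC1 in hs.
  rewrite -!mul_polyC in hs.
  have := @ring_aux _ n _ _ _ _ _ (alpha%:P) _ _ hX _ hs.
  have e : alpha%:P = d%:P + beta%:P by rewrite -polyCD /d subrK.
  move=> /(_ e).
  rewrite -!rmorphXn => h2.
  apply: (mulfI (x := ('X - alpha%:P) * (d ^+ n)%:P)).
    by rewrite mulf_neq0 //; [exact: monic_neq0 (monicXsubC _) | rewrite polyC_eq0 expf_neq0].
  by rewrite hr h2.
split; first by rewrite g0 hornerC.
move=> n n0.
by rewrite hg horner_comp hT1 (Hval _ _ _ _ n0).
Qed.
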